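(* Let $\mathcal{H}$ be a complex Hilbert space and $T\in\mathbb{B}(\mathcal{H})$. Then: (i) if $T$ is normal, then $w_{\Omega}(T) = \Omega(T)$; (ii) if $T^2 = 0$, then $w_{\Omega}(T)= \frac{\sqrt{2}}{2}\Omega(T)$.
   Context: $\mathbb{B}(\mathcal{H})$ is the algebra of bounded linear operators on $\mathcal{H}$ and $\|\cdot\|$ the usual operator norm. Dragomir's norm is $\Omega(T)=\sup\{\|\zeta T+\eta T^*\|:\ \zeta,\eta\in\mathbb{C},\ |\zeta|^2+|\eta|^2\le 1\}$. For $A\in\mathbb{B}(\mathcal{H})$, ${\rm Re}(A)=\frac{A+A^*}{2}$, and $w_\Omega(T)=\sup_{\theta\in\mathbb{R}}\Omega\big({\rm Re}(e^{i\theta}T)\big)$. *)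

(* Defs.v *)
From HB Require Import structures.
From mathcomp Require Import all_boot all_order all_algebra.
From mathcomp Require Import complex.
From mathcomp Require Import classical_sets reals trigo.

Set Implicit Arguments.
Unset Strict Implicit.
Unset Printing Implicit Defensive.

Import Order.TTheory GRing.Theory Num.Theory.
Local Open Scope ring_scope.
Local Open Scope classical_set_scope.

Section Hilbert.
Variable R : realType.
Local Notation C := (complex R).
Variable H : lmodType C.
Variable inner : H -> H -> C.

Definition is_inner_product : Prop :=
  [/\ forall (a : C) (x y z : H), inner (a *: x + y) z = a * inner x z + inner y z,
      forall x y : H, inner y x = conjc (inner x y),
      forall x : H, 0 <= inner x x
    & forall x : H, inner x x = 0 -> x = 0].

Definition hnorm (x : H) : R := Num.sqrt (complex.Re (inner x x)).

Definition is_complete : Prop :=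
  forall u : nat -> H,
    (forall e : R, 0 < e -> exists N : nat, forall m n : nat,
        (N <= m)%N -> (N <= n)%N -> hnorm (u m - u n) < e) ->
    exists l : H, forall e : R, 0 < e -> exists N : nat, forall n : nat,
        (N <= n)%N -> hnorm (u n - l) < e.

Definition is_hilbert : Prop := is_inner_product /\ is_complete.

Definition bounded_linear (T : H -> H) : Prop :=
  (forall (a : C) (x y : H), T (a *: x + y) = a *: T x + T y) /\
  (exists M : R, forall x : H, hnorm (T x) <= M * hnorm x).

Definition is_adjoint (T S : H -> H) : Prop :=
  forall x y : H, inner (T x) y = inner x (S y).

Definition opnorm (T : H -> H) : R :=
  sup [set hnorm (T x) | x in [set x : H | hnorm x <= 1]].

(* Dragomir's norm Omega(T) = sup { ||z T + w T^*|| : |z|^2 + |w|^2 <= 1 },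
   where Ts is the adjoint of T *)
Definition Omega (T Ts : H -> H) : R :=
  sup [set opnorm (fun x => zw.1 *: T x + zw.2 *: Ts x)
      | zw in [set zw : C * C | `|zw.1| ^+ 2 + `|zw.2| ^+ 2 <= 1]].

Definition expi (t : R) : C := Complex (cos t) (sin t).

(* Re(A) = (A + A^* )/2 with A = e^{i theta} T, so A^* = e^{-i theta} T^* *)
Definition ReOp (t : R) (T Ts : H -> H) : H -> H :=
  fun x => (2%:R)^-1 *: (expi t *: T x + conjc (expi t) *: Ts x).

(* w_Omega(T) = sup_theta Omega(Re(e^{i theta} T)); Re(.) is self-adjoint *)
Definition wOmega (T Ts : H -> H) : R :=
  sup [set Omega (ReOp t T Ts) (ReOp t T Ts) | t in [set: R]].

End Hilbert.

(* Main.v *)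
Require Import Defs.
From HB Require Import structures.
From mathcomp Require Import all_boot all_order all_algebra.
From mathcomp Require Import complex.
From mathcomp Require Import classical_sets reals trigo.
From mathcomp Require Import ring lra.
Import Order.TTheory GRing.Theory Num.Theory.
Local Open Scope ring_scope.
Local Open Scope complex_scope.

Section Basics.
Variable R : realType.
Local Notation C := (complex R).
Variable H : lmodType C.
Variable inner : H -> H -> C.
Hypothesis hip : is_inner_product inner.

Definition nsq (x : H) : R := complex.Re (inner x x).
Definition nc (a : C) : R := complex.Re a ^+ 2 + complex.Im a ^+ 2.

Lemma innerDZl a x y z : inner (a *: x + y) z = a * inner x z + inner y z.
Proof. by move: hip => -[h1 h2 h3 h4]; apply: h1. Qed.
Lemma inner_sym x y : inner y x = conjc (inner x y).
Proof. by move: hip => -[h1 h2 h3 h4]; apply: h2. Qed.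
Lemma inner_ge0 x : 0 <= inner x x.
Proof. by move: hip => -[h1 h2 h3 h4]; apply: h3. Qed.
Lemma inner_def x : inner x x = 0 -> x = 0.
Proof. by move: hip => -[h1 h2 h3 h4]; apply: h4. Qed.

Lemma inner0l z : inner 0 z = 0.
Proof.
have := innerDZl 1 0 0 z; rewrite scaler0 addr0 mul1r => h.
by apply: (addrI (inner 0 z)); rewrite addr0 -h.
Qed.
Lemma innerDl x y z : inner (x + y) z = inner x z + inner y z.
Proof. by rewrite -[x]scale1r innerDZl mul1r scale1r. Qed.
Lemma innerZl a x z : inner (a *: x) z = a * inner x z.
Proof. by rewrite -[a *: x]addr0 innerDZl inner0l addr0. Qed.
Lemma innerNl x z : inner (- x) z = - inner x z.
Proof. by rewrite -scaleN1r innerZl mulN1r. Qed.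
Lemma innerBl x y z : inner (x - y) z = inner x z - inner y z.
Proof. by rewrite innerDl innerNl. Qed.
Lemma conjD (a b : C) : conjc (a + b) = conjc a + conjc b.
Proof. by case: a => a1 a2; case: b => b1 b2 /=; congr Complex; ring. Qed.
Lemma conjM (a b : C) : conjc (a * b) = conjc a * conjc b.
Proof. by case: a => a1 a2; case: b => b1 b2 /=; congr Complex; ring. Qed.
Lemma conjN (a : C) : conjc (- a) = - conjc a.
Proof. by case: a => a1 a2 /=. Qed.
Lemma conjK (a : C) : conjc (conjc a) = a.
Proof. by case: a => a1 a2 /=; rewrite opprK. Qed.
Lemma inner0r z : inner z 0 = 0.
Proof. by rewrite inner_sym inner0l conjc0. Qed.
Lemma innerDr x y z : inner z (x + y) = inner z x + inner z y.
Proof. by rewrite inner_sym innerDl conjD -!inner_sym. Qed.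
Lemma innerZr a x z : inner z (a *: x) = conjc a * inner z x.
Proof. by rewrite inner_sym innerZl conjM -inner_sym. Qed.
Lemma innerNr x z : inner z (- x) = - inner z x.
Proof. by rewrite -scaleN1r innerZr conjN conjc1 mulN1r. Qed.
Lemma innerBr x y z : inner z (x - y) = inner z x - inner z y.
Proof. by rewrite innerDr innerNr. Qed.

Lemma inner_self x : inner x x = (nsq x)%:C.
Proof.
have := ger0_Im (inner_ge0 x); rewrite /nsq.
by case: (inner x x) => a b /= ->.
Qed.
Lemma nsq_ge0 x : 0 <= nsq x.
Proof. by have := inner_ge0 x; rewrite inner_self lecR. Qed.
Lemma nsq_eq0 x : nsq x = 0 -> x = 0.
Proof. by move=> h; apply: inner_def; rewrite inner_self h. Qed.
Lemma nsq0 : nsq 0 = 0.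
Proof. by rewrite /nsq inner0l. Qed.

Lemma ReC (a : C) : complex.Re (conjc a) = complex.Re a.
Proof. by case: a. Qed.

Lemma nsq_lin a b u v : nsq (a *: u + b *: v) =
  nc a * nsq u + nc b * nsq v + 2 * complex.Re (a * conjc b * inner u v).
Proof.
rewrite /nsq innerDl !innerDr !innerZl !innerZr.
rewrite (inner_sym u v) !inner_self.
case: a => a1 a2; case: b => b1 b2; case: (inner u v) => p q.
rewrite /nc /=. ring.
Qed.

Lemma nc1 : nc 1 = 1. Proof. rewrite /nc /=. ring. Qed.
Lemma ncN1 : nc (-1) = 1. Proof. rewrite /nc /=. ring. Qed.
Lemma nc_ge0 a : 0 <= nc a. Proof. rewrite /nc. nra. Qed.

Lemma nsqD u v : nsq (u + v) = nsq u + nsq v + 2 * complex.Re (inner u v).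
Proof. by rewrite -[u]scale1r -[v]scale1r nsq_lin nc1 conjc1 !mul1r !scale1r. Qed.
Lemma nsqB u v : nsq (u - v) = nsq u + nsq v - 2 * complex.Re (inner u v).
Proof.
rewrite -[u]scale1r -scaleN1r nsq_lin nc1 ncN1 !mul1r scale1r.
rewrite conjN conjc1 mulN1r -mulrN.
case: (inner u v) => p q /=; ring.
Qed.
Lemma nsqZ a u : nsq (a *: u) = nc a * nsq u.
Proof. rewrite {1}/nsq innerZl innerZr inner_self; case: a => a1 a2; rewrite /nc /=; ring. Qed.
Lemma nsqN u : nsq (- u) = nsq u.
Proof. by rewrite -scaleN1r nsqZ ncN1 mul1r. Qed.

Lemma nsq_par u v : nsq (u + v) <= 2 * nsq u + 2 * nsq v.
Proof.
have := nsq_ge0 (u - v); rewrite nsqB nsqD; lra.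
Qed.

Lemma re_cs u v : complex.Re (inner u v) ^+ 2 <= nsq u * nsq v.
Proof.
set r := complex.Re (inner u v).
have key t : 0 <= nsq u - 2 * t * r + t ^+ 2 * nsq v.
  have := nsq_ge0 (u - (t%:C) *: v).
  rewrite nsqB nsqZ innerZr conjc_real.
  have -> : complex.Re (t%:C * inner u v) = t * r.
    by rewrite /r; case: (inner u v) => p q /=; ring.
  rewrite /nc /=; nra.
have [v0|vpos] := eqVneq (nsq v) 0.
  rewrite /r; clear key r; have -> : v = 0 by exact: nsq_eq0.
  by rewrite inner0r nsq0 /= expr2 !mulr0.
have vp : 0 < nsq v by rewrite lt_def vpos nsq_ge0.
have := key (r / nsq v).
have -> : nsq u - 2 * (r / nsq v) * r + (r / nsq v) ^+ 2 * nsq v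
          = (nsq u * nsq v - r ^+ 2) / nsq v.
  by field.
rewrite pmulr_lge0 ?invr_gt0 // subr_ge0 //.
Qed.

Lemma hnorm_sq x : hnorm inner x ^+ 2 = nsq x.
Proof. by rewrite /hnorm sqr_sqrtr // nsq_ge0. Qed.
Lemma hnorm_ge0 x : 0 <= hnorm inner x.
Proof. exact: sqrtr_ge0. Qed.

Lemma nsq_to_hnorm {y x m} : 0 <= m -> nsq y <= m ^+ 2 * nsq x ->
  hnorm inner y <= m * hnorm inner x.
Proof.
move=> m0 h; rewrite -(ler_pXn2r (n:=2)) ?nnegrE ?mulr_ge0 ?hnorm_ge0 //.
by rewrite exprMn !hnorm_sq.
Qed.
Lemma hnorm_to_nsq {y x m} : hnorm inner y <= m * hnorm inner x ->
  nsq y <= m ^+ 2 * nsq x.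
Proof.
move=> h; rewrite -!hnorm_sq -exprMn.
by rewrite ler_pXn2r ?nnegrE ?hnorm_ge0 //; apply: le_trans h; exact: hnorm_ge0.
Qed.


Lemma ReD (a b : C) : complex.Re (a + b) = complex.Re a + complex.Re b.
Proof. by case: a; case: b. Qed.
Lemma ReN (a : C) : complex.Re (- a) = - complex.Re a.
Proof. by case: a. Qed.
Lemma ncM a b : nc (a * b) = nc a * nc b.
Proof. by case: a => a1 a2; case: b => b1 b2; rewrite /nc /=; ring. Qed.
Lemma ncC a : nc (conjc a) = nc a.
Proof. by case: a => a1 a2; rewrite /nc /=; ring. Qed.
Lemma ncN a : nc (- a) = nc a.
Proof. by case: a => a1 a2; rewrite /nc /=; ring. Qed.
Lemma ncR (t : R) : nc (t%:C) = t ^+ 2.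
Proof. by rewrite /nc /=; ring. Qed.
Lemma inv2C : (2%:R^-1 : C) = (2%:R^-1 : R)%:C.
Proof. by rewrite fmorphV rmorph_nat. Qed.

Definition lin (X : H -> H) := forall a x y, X (a *: x + y) = a *: X x + X y.
Definition adj (X Y : H -> H) := forall x y, inner (X x) y = inner x (Y y).
Definition normal (X Y : H -> H) := forall x, X (Y x) = Y (X x).
Definition Sop (e : C) (X Y : H -> H) := fun x => (2%:R)^-1 *: (e *: X x + conjc e *: Y x).

Section LinFacts.
Variable X : H -> H.
Hypothesis hX : lin X.
Lemma lin0 : X 0 = 0.
Proof.
have := hX 1 0 0; rewrite scaler0 addr0 scale1r => h.
by apply: (addrI (X 0)); rewrite addr0 -h.
Qed.
Lemma linD x y : X (x + y) = X x + X y.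
Proof. by rewrite -{1}[x]scale1r hX scale1r. Qed.
Lemma linZ a x : X (a *: x) = a *: X x.
Proof. by rewrite -[a *: x]addr0 hX lin0 addr0. Qed.
Lemma linN x : X (- x) = - X x.
Proof. by rewrite -scaleN1r linZ scaleN1r. Qed.
Lemma linB x y : X (x - y) = X x - X y.
Proof. by rewrite linD linN. Qed.
End LinFacts.
Arguments lin0 {X}. Arguments linD {X}. Arguments linZ {X}. Arguments linN {X}. Arguments linB {X}.

Lemma adj_sym {X Y} : adj X Y -> forall x y, inner (Y x) y = inner x (X y).
Proof.
by move=> h x y; rewrite inner_sym -h -inner_sym.
Qed.

Lemma inner_eq0 (d : H) : (forall z, inner z d = 0) -> d = 0.
Proof. by move=> h; apply: inner_def; exact: h. Qed.

Lemma adj_lin {X Y} : adj X Y -> lin Y.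
Proof.
move=> h a x y; apply/eqP; rewrite -subr_eq0; apply/eqP; apply: inner_eq0 => z.
by rewrite innerBr -h innerDr innerDr innerZr innerZr -!h subrr.
Qed.

Lemma Sop_lin e {X Y} : lin X -> lin Y -> lin (Sop e X Y).
Proof.
move=> hX hY a x y; rewrite /Sop hX hY [a *: (_ *: _)]scalerA mulrC -scalerA.
rewrite -scalerDr; congr (_ *: _).
rewrite !scalerDr !scalerA [e * a]mulrC [conjc e * a]mulrC.
by rewrite addrACA.
Qed.

Lemma Sop_adj e {X Y} : adj X Y -> adj (Sop e X Y) (Sop e X Y).
Proof.
move=> h x y; rewrite /Sop innerZl innerZr innerDl innerDr !innerZl !innerZr.
rewrite h (adj_sym h) inv2C conjc_real conjK.
by rewrite addrC.
Qed.


Lemma Re_conj_inner_self x : complex.Re (inner x x) = nsq x.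
Proof. by []. Qed.

Lemma polar {S} m : lin S -> adj S S -> 0 <= m ->
  (forall y, `|complex.Re (inner (S y) y)| <= m * nsq y) ->
  forall x, nsq (S x) <= m ^+ 2 * nsq x.
Proof.
move=> hS hadj m0 hb x.
have key y : 4 * complex.Re (inner (S x) y) <= 2 * m * (nsq x + nsq y).
  have h1 := hb (x + y); have h2 := hb (x - y).
  move: h1 h2; rewrite !ler_norml (linD hS) (linB hS) nsqD nsqB.
  rewrite !innerBl !innerBr !innerDl !innerDr !ReD !ReN.
  rewrite (hadj y x) (inner_sym (S x) y) !ReD !ReN !ReC.
  move=> /andP[h1 h1'] /andP[h2 h2'].
  nra.
set b := nsq (S x); set a := nsq x.
have kt t : 4 * (t * b) <= 2 * m * (a + t ^+ 2 * b).
  have := key (t%:C *: S x).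
  by rewrite innerZr conjc_real nsqZ ncR inner_self /= mulr0 subr0.
have b0 : 0 <= b by exact: nsq_ge0.
have a0 : 0 <= a by exact: nsq_ge0.
have [m00|mpos] := eqVneq m 0.
  rewrite m00 expr2 !mul0r; have := kt 1; rewrite m00 mulr0 mul0r mul1r; lra.
have mp : 0 < m by rewrite lt_def mpos m0.
have := kt m^-1.
have e1 : 2 * m * (a + m^-1 ^+ 2 * b) = 2 * m * a + 2 * (m^-1 * b).
  by field.
rewrite e1 => h.
have h3 : m^-1 * b <= m * a by lra.
have : m * (m^-1 * b) <= m * (m * a) by rewrite ler_pM2l.
have -> : m * (m^-1 * b) = b by field.
by have -> : m * (m * a) = m ^+ 2 * a by ring.
Qed.


Lemma normal_nsq {X Y} : adj X Y -> normal X Y -> forall z, nsq (Y z) = nsq (X z).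
Proof.
move=> ha hn z; rewrite /nsq (adj_sym ha) hn -ha.
by rewrite inner_sym ReC.
Qed.

Lemma Sop_nsq {e X Y} x : adj X Y -> normal X Y -> nc e = 1 ->
  nsq (Sop e X Y x) = (nsq (X x) + complex.Re (e * e * inner (X (X x)) x)) / 2.
Proof.
move=> ha hn he; rewrite /Sop nsqZ inv2C ncR nsq_lin ncC he conjK.
rewrite (normal_nsq ha hn) -ha.
by field.
Qed.

Lemma Re_le_nsq {g X Y} z : adj X Y -> normal X Y -> nc g = 1 ->
  complex.Re (g * inner (X (X z)) z) <= nsq (X z).
Proof.
move=> ha hn hg.
have -> : g * inner (X (X z)) z = inner (g *: X z) (Y z) by rewrite innerZl ha.
have := re_cs (g *: X z) (Y z); rewrite nsqZ hg mul1r (normal_nsq ha hn).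
have := nsq_ge0 (X z); nra.
Qed.

Definition Pbound X Y m := forall e x, nc e = 1 -> nsq (Sop e X Y x) <= m ^+ 2 * nsq x.

Definition sq (X : H -> H) := fun x => X (X x).

Lemma sq_lin {X} : lin X -> lin (sq X).
Proof. by move=> h a x y; rewrite /sq !h. Qed.
Lemma sq_adj {X Y} : adj X Y -> adj (sq X) (sq Y).
Proof. by move=> h x y; rewrite /sq h h. Qed.
Lemma sq_normal {X Y} : normal X Y -> normal (sq X) (sq Y).
Proof. by move=> h x; rewrite /sq !h. Qed.

Lemma sqrtc_unit {g} : nc g = 1 -> nc (sqrtc g) = 1 /\ sqrtc g * sqrtc g = g.
Proof.
move=> hg; have e2 : sqrtc g * sqrtc g = g by rewrite -expr2 sqr_sqrtc.
split=> //; have := ncM (sqrtc g) (sqrtc g); rewrite e2 hg.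
have := nc_ge0 (sqrtc g); nra.
Qed.

Lemma step X Y m : lin X -> adj X Y -> normal X Y -> 0 <= m -> Pbound X Y m ->
  Pbound (sq X) (sq Y) (m ^+ 2).
Proof.
move=> hl ha hn m0 hP f x hf.
have hlY := adj_lin ha.
apply: (polar (m ^+ 2) (Sop_lin f (sq_lin hl) (sq_lin hlY)) (Sop_adj f (sq_adj ha))).
  by rewrite exprn_ge0.
move=> y.
have aux g : nc g = 1 -> complex.Re (g * inner (X (X y)) y) <= m ^+ 2 * nsq y.
  move=> hg; have [he1 he2] := sqrtc_unit hg.
  have := hP (sqrtc g) y he1; rewrite (Sop_nsq y ha hn he1) he2.
  have := Re_le_nsq y ha hn hg; lra.
have -> : complex.Re (inner (Sop f (sq X) (sq Y) y) y) =
          complex.Re (f * inner (X (X y)) y).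
  rewrite /Sop innerZl innerDl !innerZl inv2C.
  rewrite (adj_sym (sq_adj ha)) (inner_sym (sq X y) y) /sq.
  case: f {hf} => f1 f2; case: (inner (X (X y)) y) => p q /=; by field.
rewrite ler_norml; apply/andP; split; last exact: aux.
rewrite lerNl -ReN -mulNr; apply: aux; by rewrite ncN.
Qed.


Lemma iC_unit : nc 'i = 1. Proof. by rewrite /nc /=; ring. Qed.
Lemma niC_unit : nc (- 'i) = 1. Proof. by rewrite /nc /=; ring. Qed.

Lemma extract X Y m : Pbound X Y m -> forall x, nsq (X x) <= 4 * (m ^+ 2 * nsq x).
Proof.
move=> hP x.
have -> : X x = Sop 1 X Y x + 'i *: Sop (- 'i) X Y x.
  rewrite /Sop !scalerDr !scalerA conjc1.
  have gen (a b c d : C) : a + c = 1 -> b + d = 0 ->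
      X x = a *: X x + b *: Y x + (c *: X x + d *: Y x).
    by move=> h1 h2; rewrite addrACA -!scalerDl h1 h2 scale1r scale0r addr0.
  apply: gen; rewrite inv2C /=.
    apply/eqP; rewrite eq_complex /=; apply/andP; split; apply/eqP; by field.
  apply/eqP; rewrite eq_complex /=; apply/andP; split; apply/eqP; by field.
have h1 := hP 1 x nc1; have h2 := hP (- 'i) x niC_unit.
have := nsq_par (Sop 1 X Y x) ('i *: Sop (- 'i) X Y x).
rewrite [nsq ('i *: _)]nsqZ iC_unit mul1r; lra.
Qed.

Lemma base_pow {X Y} : adj X Y -> normal X Y -> forall x,
  nsq (X x) ^+ 2 <= nsq (X (X x)) * nsq x.
Proof.
move=> ha hn x.
have := re_cs (Y (X x)) x; rewrite (adj_sym ha) -/(nsq (X x)).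
by rewrite (normal_nsq ha hn).
Qed.

Lemma iter_sq k X : iter k.+1 sq X = iter k sq (sq X).
Proof. by rewrite iterSr. Qed.

Lemma pow_le k : forall X Y, lin X -> adj X Y -> normal X Y -> forall x,
  nsq (X x) ^+ (2 ^ k) <= nsq (iter k sq X x) * nsq x ^+ (2 ^ k - 1).
Proof.
elim: k => [|k IH] X Y hl ha hn x.
  by rewrite /= expn0 subnn expr0 expr1 mulr1.
rewrite iter_sq.
have IH' := IH (sq X) (sq Y) (sq_lin hl) (sq_adj ha) (sq_normal hn) x.
have hb := base_pow ha hn x.
rewrite expnS exprM.
have p0 : (0 < 2 ^ k)%N by rewrite expn_gt0.
apply: le_trans (_ : (nsq (sq X x) * nsq x) ^+ (2 ^ k) <= _).
  by rewrite ler_pXn2r ?nnegrE ?exprn_ge0 ?mulr_ge0 ?nsq_ge0.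
rewrite exprMn.
have -> : (2 * 2 ^ k - 1 = (2 ^ k - 1) + 2 ^ k)%N.
  by rewrite mul2n -addnn addnBAC.
rewrite exprD mulrA ler_wpM2r ?exprn_ge0 ?nsq_ge0 //.
Qed.

Lemma bern (d : R) (n : nat) : 0 <= d -> 1 + n%:R * d <= (1 + d) ^+ n.
Proof.
move=> d0; elim: n => [|n IH]; first by rewrite mul0r addr0 expr0.
rewrite exprS -natr1.
have : 0 <= n%:R * d by rewrite mulr_ge0.
nra.
Qed.

Lemma lim_le (a b : R) : 0 <= a -> 0 <= b ->
  (forall k, a ^+ (2 ^ k) <= 4 * b ^+ (2 ^ k)) -> a <= b.
Proof.
move=> a0 b0 h; rewrite leNgt; apply/negP => ab.
have [b00|bpos] := eqVneq b 0.
  have := h 0%N; rewrite expn0 !expr1 b00; lra.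
have bp : 0 < b by rewrite lt_def bpos b0.
set d := a / b - 1.
have dp : 0 < d by rewrite /d subr_gt0 ltr_pdivlMr // mul1r.
have ad : a = b * (1 + d) by rewrite /d; field.
have /archi_boundP : 0 <= 3 / d by rewrite divr_ge0 // ltW.
set k := Num.Def.archi_bound _ => hk.
have := h k; rewrite ad exprMn.
have hb1 := bern d (2 ^ k)%N (ltW dp).
have kk : (k%:R : R) <= (2 ^ k)%N%:R.
  by rewrite ler_nat; apply: ltnW; apply: ltn_expl.
have k3 : 3 < k%:R * d by rewrite -ltr_pdivrMr.
have bk : 0 < b ^+ (2 ^ k) by rewrite exprn_gt0.
move=> hh.
have : (1 + d) ^+ (2 ^ k) <= 4.
  by rewrite -(ler_pM2l bk) [_ * 4]mulrC.
have : (k%:R : R) * d <= (2 ^ k)%N%:R * d by rewrite ler_pM2r.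
lra.
Qed.


Lemma P_iter k : forall X Y m, lin X -> adj X Y -> normal X Y -> 0 <= m ->
  Pbound X Y m -> Pbound (iter k sq X) (iter k sq Y) (m ^+ (2 ^ k)).
Proof.
elim: k => [|k IH] X Y m hl ha hn m0 hP; first by rewrite /= expn0 expr1.
rewrite !iter_sq expnS exprM.
apply: IH; rewrite ?exprn_ge0 //.
- exact: sq_lin.
- exact: sq_adj.
- exact: sq_normal.
- exact: step.
Qed.

Lemma main_normal X Y m : lin X -> adj X Y -> normal X Y -> 0 <= m ->
  Pbound X Y m -> forall x, nsq (X x) <= m ^+ 2 * nsq x.
Proof.
move=> hl ha hn m0 hP x.
apply: lim_le; rewrite ?mulr_ge0 ?exprn_ge0 ?nsq_ge0 // => k.
have h1 := pow_le k X Y hl ha hn x.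
have h2 := extract _ _ _ (P_iter k X Y m hl ha hn m0 hP) x.
apply: le_trans h1 _.
have p0 : (0 < 2 ^ k)%N by rewrite expn_gt0.
have -> : (m ^+ 2 * nsq x) ^+ (2 ^ k) =
   (m ^+ (2 ^ k)) ^+ 2 * nsq x * nsq x ^+ (2 ^ k - 1).
  rewrite exprMn -exprM mulnC exprM -mulrA -exprS.
  by rewrite subn1 prednK.
rewrite mulrA ler_wpM2r ?exprn_ge0 ?nsq_ge0 //.
Qed.


Lemma nil_bound X Y N : lin X -> adj X Y -> (forall x, X (X x) = 0) -> 0 <= N ->
  (forall z, nsq (X z) <= N ^+ 2 * nsq z) ->
  forall x, nsq (X x) + nsq (Y x) <= N ^+ 2 * nsq x.
Proof.
move=> hl ha hnil N0 hN x.
set v := X (Y x).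
have hs : nsq (Y x) = complex.Re (inner v x) by rewrite /v ha.
have hxv : complex.Re (inner x v) = nsq (Y x) by rewrite inner_sym ReC hs.
have hv : nsq v <= N ^+ 2 * nsq (Y x) by exact: hN.
have kt t : nsq (X x) <= N ^+ 2 * (nsq x + t ^+ 2 * nsq v - 2 * t * nsq (Y x)).
  have -> : X x = X (x - t%:C *: v).
    by rewrite (linB hl) (linZ hl) /v hnil scaler0 subr0.
  apply: le_trans (hN _) _; rewrite nsqB nsqZ ncR innerZr conjc_real.
  have -> : complex.Re (t%:C * inner x v) = t * complex.Re (inner x v).
    by case: (inner x v) => p q /=; ring.
  rewrite hxv.
  by apply: ler_wpM2l; rewrite ?exprn_ge0 //; lra.
have a0 := nsq_ge0 x; have s0 := nsq_ge0 (Y x); have v0 := nsq_ge0 v.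
have [N00|Npos] := eqVneq N 0.
  move: hv (kt 0); rewrite N00 expr2 !mul0r => hv hk.
  have v00 : nsq v = 0 by apply/eqP; rewrite eq_le hv v0.
  have := re_cs v x; rewrite -hs v00 mul0r => hss.
  have : nsq (Y x) = 0 by nra.
  lra.
have Np : 0 < N by rewrite lt_def Npos N0.
have N2 : 0 < N ^+ 2 by rewrite exprn_gt0.
have := kt (N ^+ 2)^-1.
have -> : N ^+ 2 * (nsq x + (N ^+ 2)^-1 ^+ 2 * nsq v - 2 * (N ^+ 2)^-1 * nsq (Y x))
   = N ^+ 2 * nsq x + (N ^+ 2)^-1 * nsq v - 2 * nsq (Y x).
  by field; rewrite ?expf_neq0 ?lt0r_neq0.
have : (N ^+ 2)^-1 * nsq v <= nsq (Y x).
  by rewrite ler_pdivrMl // mulrC [_ * nsq (Y x)]mulrC -[X in _ <= X]mulrC.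
lra.
Qed.

Lemma Sop_nsq_nil e X Y x : adj X Y -> X (X x) = 0 -> nc e = 1 ->
  nsq (Sop e X Y x) = (nsq (X x) + nsq (Y x)) / 4.
Proof.
move=> ha hnil he; rewrite /Sop nsqZ inv2C ncR nsq_lin ncC he conjK.
rewrite -ha hnil inner0l mulr0 /=.
by field.
Qed.

Lemma nsq_ball {a b u v} : nc a + nc b <= 1 -> nsq (a *: u + b *: v) <= nsq u + nsq v.
Proof.
move=> hab.
have h := nsq_ge0 (conjc b *: u + (- conjc a) *: v).
move: h; rewrite !nsq_lin !ncC ncN ncC.
have -> : complex.Re (conjc b * conjc (- conjc a) * inner u v)
   = - complex.Re (a * conjc b * inner u v).
  by case: a hab => a1 a2; case: b => b1 b2; case: (inner u v) => p q /= _; ring.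
have := nc_ge0 a; have := nc_ge0 b; have := nsq_ge0 u; have := nsq_ge0 v.
nra.
Qed.

Lemma Sop_bound e X Y x : nc e = 1 ->
  nsq (Sop e X Y x) <= (nsq (X x) + nsq (Y x)) / 2.
Proof.
move=> he; rewrite /Sop nsqZ inv2C ncR.
have := nsq_par (e *: X x) (conjc e *: Y x); rewrite !nsqZ ncC he !mul1r.
move=> h; have -> : (2^-1 : R) ^+ 2 = 4^-1 by field.
lra.
Qed.


Definition bnd (F : H -> H) := exists K, 0 <= K /\ forall x, nsq (F x) <= K * nsq x.

Lemma hnorm0 : hnorm inner 0 = 0.
Proof. by rewrite /hnorm -/(nsq 0) nsq0 sqrtr0. Qed.

Lemma opset_ub {F} : bnd F ->
  has_ubound [set hnorm inner (F x) | x in [set x | hnorm inner x <= 1]].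
Proof.
case=> K [K0 hK]; exists (Num.sqrt K) => _ [x hx <-].
have h : hnorm inner (F x) <= Num.sqrt K * hnorm inner x.
  by apply: nsq_to_hnorm; rewrite ?sqrtr_ge0 ?sqr_sqrtr.
apply: le_trans h _; rewrite -[leRHS]mulr1 ler_wpM2l ?sqrtr_ge0 //.
Qed.

Lemma opnorm_ge {F} x : bnd F -> hnorm inner x <= 1 -> hnorm inner (F x) <= opnorm inner F.
Proof. by move=> hF hx; have /ubP := ub_le_sup (opset_ub hF); apply; exists x. Qed.

Lemma opnorm_ge0 {F} : bnd F -> 0 <= opnorm inner F.
Proof.
move=> hF; apply: le_trans (opnorm_ge 0 hF _); first exact: hnorm_ge0.
by rewrite hnorm0.
Qed.

Lemma opnorm_ub F B : 0 <= B -> (forall x, nsq (F x) <= B ^+ 2 * nsq x) ->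
  opnorm inner F <= B.
Proof.
move=> B0 hB; apply: ge_sup.
  by exists (hnorm inner (F 0)); exists 0 => //; rewrite /= hnorm0.
move=> _ [x hx <-]; apply: le_trans (nsq_to_hnorm B0 (hB x)) _.
by rewrite -[leRHS]mulr1 ler_wpM2l.
Qed.

Lemma hnorm_pos {x} : x != 0 -> 0 < hnorm inner x.
Proof.
move=> hx; rewrite /hnorm sqrtr_gt0 -/(nsq x) lt_def nsq_ge0 andbT.
by apply/eqP => /nsq_eq0 h; rewrite h eqxx in hx.
Qed.

Lemma opnorm_bound {F} : lin F -> bnd F -> forall x,
  nsq (F x) <= opnorm inner F ^+ 2 * nsq x.
Proof.
move=> hl hF x.
have [->|xn0] := eqVneq x 0.
  by rewrite (lin0 hl) nsq0 mulr0.
have hp := hnorm_pos xn0.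
set h := hnorm inner x in hp.
set y := (h^-1)%:C *: x.
have ny : nsq y = 1.
  rewrite /y nsqZ ncR -hnorm_sq -/h; field; by rewrite lt0r_neq0.
have hy : hnorm inner y <= 1 by rewrite /hnorm -/(nsq y) ny sqrtr1.
have := opnorm_ge y hF hy; rewrite -[X in _ <= X]mulr1 -[1]sqrtr1 -ny.
move/hnorm_to_nsq; rewrite /y (linZ hl) nsqZ ncR -(hnorm_sq x) -/h.
rewrite ny mulr1 => hh.
have h2 : 0 < h ^+ 2 by rewrite exprn_gt0.
have := hh; rewrite -(ler_pM2r h2) => hh2.
have e : h^-1 ^+ 2 * nsq (F x) * h ^+ 2 = nsq (F x).
  by field; rewrite lt0r_neq0.
by rewrite -e.
Qed.

Lemma ballE (z w : C) : (`|z| ^+ 2 + `|w| ^+ 2 <= 1) = (nc z + nc w <= 1).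
Proof. by rewrite -!add_Re2_Im2 -rmorphD; apply: (lecR _ 1). Qed.

Definition comb (a b : C) (T Ts : H -> H) := fun x => a *: T x + b *: Ts x.

Lemma comb_lin {a b T Ts} : lin T -> lin Ts -> lin (comb a b T Ts).
Proof.
move=> h1 h2 c x y; rewrite /comb h1 h2 !scalerDr !scalerA [a * c]mulrC [b * c]mulrC.
by rewrite -!scalerA addrACA.
Qed.

Lemma comb_bnd {a b T Ts} : bnd T -> bnd Ts -> nc a + nc b <= 1 -> bnd (comb a b T Ts).
Proof.
move=> [K1 [K10 h1]] [K2 [K20 h2]] hab; exists (K1 + K2); split; first by rewrite addr_ge0.
move=> x; rewrite /comb; apply: le_trans (nsq_ball hab) _.
by rewrite mulrDl lerD.
Qed.

Lemma Omega_ge {T Ts a b} : bnd T -> bnd Ts -> nc a + nc b <= 1 ->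
  opnorm inner (comb a b T Ts) <= Omega inner T Ts.
Proof.
move=> [K1 [K10 h1]] [K2 [K20 h2]] hab.
apply: ub_le_sup; last by exists (a, b) => //=; rewrite ballE.
exists (Num.sqrt (K1 + K2)) => _ [[c d] /= hcd <-].
apply: opnorm_ub; first exact: sqrtr_ge0.
move=> x; rewrite sqr_sqrtr ?addr_ge0 //.
apply: le_trans (nsq_ball _) _; first by rewrite -ballE.
by rewrite mulrDl lerD.
Qed.

Lemma Omega_ub T Ts B : 0 <= B ->
  (forall a b, nc a + nc b <= 1 -> forall x, nsq (a *: T x + b *: Ts x) <= B ^+ 2 * nsq x) ->
  Omega inner T Ts <= B.
Proof.
move=> B0 hB; apply: ge_sup.
  exists (opnorm inner (fun x => 0 *: T x + 0 *: Ts x)); exists (0, 0) => //=.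
  by rewrite ballE /nc /=; lra.
move=> _ [[c d] /= hcd <-]; apply: opnorm_ub => // x.
by apply: hB; rewrite -ballE.
Qed.

Lemma Omega_ge0 T Ts : bnd T -> bnd Ts -> 0 <= Omega inner T Ts.
Proof.
move=> h1 h2.
have hab : nc 0 + nc 0 <= 1 by rewrite /nc /=; lra.
apply: le_trans (Omega_ge h1 h2 hab).
exact: opnorm_ge0 (comb_bnd h1 h2 hab).
Qed.

Lemma wOmega_ub T Ts B : (forall t, Omega inner (ReOp t T Ts) (ReOp t T Ts) <= B) ->
  wOmega inner T Ts <= B.
Proof.
move=> hB; apply: ge_sup; first by exists (Omega inner (ReOp 0 T Ts) (ReOp 0 T Ts)), 0.
by move=> _ [t _ <-].
Qed.

Lemma wOmega_ge {T Ts B} t : (forall t, Omega inner (ReOp t T Ts) (ReOp t T Ts) <= B) ->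
  Omega inner (ReOp t T Ts) (ReOp t T Ts) <= wOmega inner T Ts.
Proof.
move=> hB; apply: ub_le_sup; last by exists t.
by exists B => _ [s _ <-].
Qed.

Lemma nc_expi t : nc (expi t) = 1.
Proof. by rewrite /nc /expi /= cos2Dsin2. Qed.

Lemma expi_surj {e} : nc e = 1 -> exists t, expi t = e.
Proof.
case: e => a b; rewrite /nc /= => hab.
have hab' : -1 <= a <= 1 by apply/andP; split; nra.
have ca : cos (acos a) = a by apply: acosK; rewrite in_itv /=.
have sa : sin (acos a) = `|b|.
  rewrite sin_acos // -sqrtr_sqr; congr Num.sqrt; lra.
have [b0|b0] := leP 0 b.
  by exists (acos a); rewrite /expi ca sa ger0_norm.
by exists (- acos a); rewrite /expi cosN sinN ca sa ltr0_norm // opprK.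
Qed.

Lemma ReOpE t (T Ts : H -> H) : ReOp t T Ts = Sop (expi t) T Ts.
Proof. by []. Qed.


Lemma adj_bnd {T Ts} : bnd T -> adj T Ts -> bnd Ts.
Proof.
move=> [K [K0 hK]] ha; exists K; split => // x.
set s := nsq (Ts x).
have hs : s = complex.Re (inner (T (Ts x)) x) by rewrite ha.
have := re_cs (T (Ts x)) x; rewrite -hs => hc.
have h2 := hK (Ts x); rewrite -/s in h2.
have s0 : 0 <= s by exact: nsq_ge0.
have a0 := nsq_ge0 x.
have [s00|spos] := eqVneq s 0; first by rewrite s00 mulr_ge0.
have sp : 0 < s by rewrite lt_def spos s0.
have : s * s <= s * (K * nsq x).
  apply: le_trans (_ : nsq (T (Ts x)) * nsq x <= _); first by rewrite -expr2.
  by rewrite mulrA [s * K]mulrC ler_wpM2r.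
by rewrite ler_pM2l.
Qed.

Lemma Sop_bnd {e T Ts} : nc e = 1 -> bnd T -> bnd Ts -> bnd (Sop e T Ts).
Proof.
move=> he [K1 [K10 h1]] [K2 [K20 h2]]; exists ((K1 + K2) / 2); split.
  by rewrite divr_ge0 ?addr_ge0.
move=> x; apply: le_trans (Sop_bound _ _ _ x he) _.
have -> : (K1 + K2) / 2 * nsq x = (K1 * nsq x + K2 * nsq x) / 2 by ring.
have := h1 x; have := h2 x; lra.
Qed.

Lemma nc_add a b : nc (a + b) <= 2 * (nc a + nc b).
Proof.
case: a => a1 a2; case: b => b1 b2; rewrite /nc /=.
have := sqr_ge0 (a1 - b1); have := sqr_ge0 (a2 - b2); nra.
Qed.

Lemma Omega_S_le T Ts t : lin T -> bnd T -> adj T Ts ->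
  Omega inner (ReOp t T Ts) (ReOp t T Ts) <= Omega inner T Ts.
Proof.
move=> hl hb ha; have hbs := adj_bnd hb ha; have hls := adj_lin ha.
rewrite ReOpE; set e := expi t; set S := Sop e T Ts.
apply: Omega_ub; first exact: Omega_ge0.
move=> a b hab x.
set a' := (a + b) * 2%:R^-1 * e; set b' := (a + b) * 2%:R^-1 * conjc e.
have hab' : nc a' + nc b' <= 1.
  rewrite /a' /b' !ncM ncC nc_expi inv2C ncR.
  have := nc_add a b; lra.
have -> : a *: S x + b *: S x = comb a' b' T Ts x.
  by rewrite /S /Sop /comb -scalerDl scalerA scalerDr !scalerA /a' /b'.
have hc := opnorm_bound (comb_lin hl hls) (comb_bnd hb hbs hab') x.
apply: le_trans hc _; apply: ler_wpM2r; first exact: nsq_ge0.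
rewrite ler_pXn2r ?nnegrE ?opnorm_ge0 ?(comb_bnd hb hbs hab') ?Omega_ge0 //.
exact: Omega_ge.
exact: comb_bnd.
Qed.

Lemma final_general T Ts : lin T -> bnd T -> adj T Ts ->
  wOmega inner T Ts <= Omega inner T Ts.
Proof. by move=> hl hb ha; apply: wOmega_ub => t; exact: Omega_S_le. Qed.


Lemma sqrt2_sq : Num.sqrt (2%:R : R) ^+ 2 = 2.
Proof. by rewrite sqr_sqrtr // ler0n. Qed.
Lemma sqrt2_gt0 : 0 < Num.sqrt (2%:R : R).
Proof. by rewrite sqrtr_gt0 ltr0n. Qed.

Lemma final_i T Ts : lin T -> bnd T -> adj T Ts -> normal T Ts ->
  Omega inner T Ts <= wOmega inner T Ts.
Proof.
move=> hl hb ha hn; have hbs := adj_bnd hb ha; have hls := adj_lin ha.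
have hB t := Omega_S_le T Ts t hl hb ha.
set W := wOmega inner T Ts.
have bS e : nc e = 1 -> bnd (Sop e T Ts) by move=> he; exact: Sop_bnd.
have lS e : lin (Sop e T Ts) by exact: Sop_lin.
have W0 : 0 <= W.
  apply: le_trans (wOmega_ge 0 hB).
  rewrite ReOpE; apply: Omega_ge0; exact: bS (nc_expi 0).
set s := Num.sqrt (2%:R : R).
have s2 : 0 < s := sqrt2_gt0; have s2s : s ^+ 2 = 2 := sqrt2_sq.
set m := W / s.
have m0 : 0 <= m by rewrite divr_ge0 // ltW.
have hm2 : m ^+ 2 = W ^+ 2 / 2 by rewrite /m expr_div_n s2s.
have hP : Pbound T Ts m.
  move=> e x he; have [t et] := expi_surj he.
  set c : C := (s^-1)%:C.
  have nc_c : nc c = 2^-1 by rewrite /c ncR exprVn s2s.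
  have hcc : nc c + nc c <= 1 by rewrite nc_c; lra.
  set S := Sop e T Ts.
  have hF := opnorm_bound (comb_lin (lS e) (lS e)) (comb_bnd (bS e he) (bS e he) hcc) x.
  have hO := Omega_ge (bS e he) (bS e he) hcc.
  have hW : Omega inner S S <= W by rewrite /S -et -ReOpE; exact: wOmega_ge t hB.
  have hcomb : nsq (comb c c S S x) = 2 * nsq (S x).
    rewrite /comb -scalerDl nsqZ; congr (_ * _).
    rewrite /c /nc /= addr0 expr0n /= addr0.
    have sn : s != 0 by rewrite lt0r_neq0.
    have -> : (s^-1 + s^-1) ^+ 2 = 4 / s ^+ 2 by field.
    by rewrite s2s; field.
  have op0 : 0 <= opnorm inner (comb c c S S).
    exact: opnorm_ge0 (comb_bnd (bS e he) (bS e he) hcc).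
  have hop : opnorm inner (comb c c S S) ^+ 2 <= W ^+ 2.
    by rewrite ler_pXn2r ?nnegrE //; apply: le_trans hO hW.
  have := nsq_ge0 x => x0.
  move: hF; rewrite hcomb hm2 => hF.
  have : opnorm inner (comb c c S S) ^+ 2 * nsq x <= W ^+ 2 * nsq x.
    by rewrite ler_wpM2r.
  lra.
have hT := main_normal T Ts m hl ha hn m0 hP.
apply: Omega_ub => // a b hab x.
apply: le_trans (nsq_ball hab) _.
rewrite (normal_nsq ha hn).
have := hT x; rewrite hm2; lra.
Qed.


Lemma final_ii T Ts : lin T -> bnd T -> adj T Ts -> (forall x, T (T x) = 0) ->
  wOmega inner T Ts = Num.sqrt 2%:R / 2%:R * Omega inner T Ts.
Proof.
move=> hl hb ha hnil; have hbs := adj_bnd hb ha; have hls := adj_lin ha.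
set N := opnorm inner T.
have N0 : 0 <= N := opnorm_ge0 hb.
have hN := opnorm_bound hl hb.
have hNil := nil_bound T Ts N hl ha hnil N0 hN.
set s := Num.sqrt (2%:R : R).
have s2 : 0 < s := sqrt2_gt0; have s2s : s ^+ 2 = 2 := sqrt2_sq.
have bS e : nc e = 1 -> bnd (Sop e T Ts) by move=> he; exact: Sop_bnd.
have lS e : lin (Sop e T Ts) by exact: Sop_lin.
have hnT : forall x, nsq (T x) <= N ^+ 2 * nsq x.
  by move=> x; have := hNil x; have := nsq_ge0 (Ts x); lra.
have hOm : Omega inner T Ts = N.
  apply/eqP; rewrite eq_le; apply/andP; split.
    apply: Omega_ub => // a b hab x.
    by apply: le_trans (nsq_ball hab) _.
  have h10 : nc 1 + nc 0 <= 1 by rewrite nc1 /nc /=; lra.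
  apply: le_trans (Omega_ge hb hbs h10).
  apply: ge_sup; first by exists (hnorm inner (T 0)), 0 => //=; rewrite hnorm0.
  move=> _ [x hx <-].
  have := opnorm_ge x (comb_bnd hb hbs h10) hx.
  by rewrite /comb scale1r scale0r addr0.
set B := s / 2 * N.
have B0 : 0 <= B by rewrite mulr_ge0 // divr_ge0 // ltW.
have hB2 : B ^+ 2 = N ^+ 2 / 2.
  by rewrite /B !exprMn s2s; field.
have hBt t : Omega inner (ReOp t T Ts) (ReOp t T Ts) <= B.
  apply: Omega_ub => // a b hab x.
  apply: le_trans (nsq_ball hab) _.
  rewrite ReOpE Sop_nsq_nil ?nc_expi ?hnil // hB2.
  have := hNil x; lra.
rewrite hOm; apply/eqP; rewrite eq_le; apply/andP; split.
  exact: wOmega_ub.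
apply: le_trans (wOmega_ge 0 hBt).
rewrite ReOpE; set e := expi 0; have he : nc e = 1 := nc_expi 0.
set S := Sop e T Ts.
set c : C := (s^-1)%:C.
have nc_c : nc c = 2^-1 by rewrite /c ncR exprVn s2s.
have hcc : nc c + nc c <= 1 by rewrite nc_c; lra.
apply: le_trans (Omega_ge (bS e he) (bS e he) hcc).
set F := comb c c S S.
have hFb : bnd F := comb_bnd (bS e he) (bS e he) hcc.
have hcomb x : nsq (F x) = 2 * nsq (S x).
  rewrite /F /comb -scalerDl nsqZ; congr (_ * _).
  rewrite /c /nc /= addr0 expr0n /= addr0.
  have sn : s != 0 by rewrite lt0r_neq0.
  have -> : (s^-1 + s^-1) ^+ 2 = 4 / s ^+ 2 by field.
  by rewrite s2s; field.
have : N <= s * opnorm inner F.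
  apply: ge_sup; first by exists (hnorm inner (T 0)), 0 => //=; rewrite hnorm0.
  move=> _ [x hx <-].
  apply: le_trans (_ : s * hnorm inner (F x) <= _); last first.
    by rewrite ler_wpM2l ?(ltW s2) ?opnorm_ge.
  apply: nsq_to_hnorm; first exact: ltW.
  rewrite s2s hcomb /S Sop_nsq_nil ?hnil //.
  have := nsq_ge0 (Ts x); lra.
move=> hh; rewrite /B.
have -> : opnorm inner F = s / 2 * (s * opnorm inner F).
  by rewrite mulrA -(mulrC s) mulrA -expr2 s2s; field.
by rewrite ler_wpM2l // divr_ge0 // ltW.
Qed.

End Basics.

Theorem corollary3p6 (R : realType) (H : lmodType (complex R))
    (inner : H -> H -> complex R) (T Ts : H -> H) :
  is_hilbert inner ->
  bounded_linear inner T ->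
  is_adjoint inner T Ts ->
  ((forall x : H, T (Ts x) = Ts (T x)) ->
     wOmega inner T Ts = Omega inner T Ts) /\
  ((forall x : H, T (T x) = 0) ->
     wOmega inner T Ts = Num.sqrt 2%:R / 2%:R * Omega inner T Ts).
Proof.
move=> [hip _] [hl [M hM]] ha.
have hl' : lin R H T by [].
have ha' : adj R H inner T Ts by [].
have hb : bnd R H inner T.
  exists (M ^+ 2); split; first exact: sqr_ge0.
  by move=> x; apply: (hnorm_to_nsq R H inner hip); apply: hM.
split => [hn|hnil].
  apply/eqP; rewrite eq_le (final_general R H inner hip T Ts hl' hb ha') /=.
  exact: (final_i R H inner hip T Ts hl' hb ha').
exact: (final_ii R H inner hip T Ts hl' hb ha').
Qed.
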